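(* As $t\to+\infty$, $$f(t,1/e)\sim\left(\frac{\pi t}{2}\right)^{1/2}e^{t},$$ where $f(t,a)=t\int_0^1(ax)^{-tx}\,dx$.
   Context: For real $a>0$ and real $t$, $f(t,a)=t\int_0^1 (ax)^{-tx}\,dx$, where $(ax)^{-tx}=\exp(-tx\ln(ax))$ for $x\in(0,1]$. The notation $g\sim h$ means $g/h\to1$. *)

(* Defs.v *)
From Stdlib Require Import Reals.
From Coquelicot Require Import Coquelicot.
Open Scope R_scope.

(* (a x)^(-t x) = exp (-t x ln (a x)) for x in (0,1].  At the single point
   x = 0 Stdlib's ln 0 = 0, so the integrand takes the value 1 there (its
   continuous extension); a single point does not affect the integral. *)
Definition integrand (t a x : R) : R := exp (- (t * x * ln (a * x))).

Definition f_ta (t a : R) : R := t * RInt (fun x => integrand t a x) 0 1.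

(* Main.v *)
Require Import Defs.
From Stdlib Require Import Reals.
From Coquelicot Require Import Coquelicot.
Open Scope R_scope.
From Stdlib Require Import Lra.
From mathcomp Require all_boot all_order all_algebra all_classical all_reals all_analysis Rstruct Rstruct_topology.

Module MC.
Import all_boot all_order all_algebra all_classical all_reals all_analysis Rstruct Rstruct_topology.
Import Order.TTheory GRing.Theory Num.Theory.
Import numFieldNormedType.Exports.
Local Open Scope classical_set_scope.
Local Open Scope ring_scope.

Lemma RcosE (x : R) : Rtrigo_def.cos x = cos x.
Proof.
rewrite /Rtrigo_def.cos; case: exist_cos => y.
rewrite /cos_in /infinite_sum => cos_ub.
have := @cvg_cos_coeff' R x => /cvg_lim <- //.
apply/esym; apply: (@cvg_lim R^o) => //.
rewrite -cvg_shiftS /=; apply/cvgrPdist_lt => /= e /RltP /cos_ub[N Nub].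
near=> n.
have nN : (n >= N)%coq_nat by apply/ssrnat.leP; near: n; exact: nbhs_infty_ge.
move: Nub => /(_ _ nN) /[!RdistE] /RltP /=.
rewrite distrC sum_f_R0E; congr (`| _ - _ | < e).
apply: eq_bigr=> k _; rewrite /cos_n /cos_coeff' !RpowE factE INRE RmultE Rsqr_def RmultE.
have -> : (2 * k)%coq_nat = k.*2 by rewrite -mul2n.
rewrite -expr2 -exprM mul2n RdivE.
by rewrite mulrAC.
Unshelve. all: by end_near. Qed.


Lemma piE : pi = PI.
Proof.
have h1 : (0 <= (pi : R) / 2 <= 2)%R.
  have a := @pihalf_ge1 R; have b := @pihalf_lt2 R.
  by apply/andP; split; [exact: le_trans ler01 a | exact: ltW b].
have h2 : (0 <= PI / 2 <= 2)%R.
  have a := PI2_1; have b := PI_4.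
  have -> : (PI / 2)%R = (PI / 2)%coqR by [].
  have two : (2%R : R) = 2%coqR by rewrite IZRposE INRE.
  have h2' : (0 <= PI / 2 <= 2)%coqR by Lra.lra.
  by apply/andP; split; apply/RleP; [exact (proj1 h2') | rewrite two; exact (proj2 h2')].
have := cos_02_uniq h1 (@cos_pihalf R) h2.
have -> : cos (PI / 2) = 0 by rewrite -RcosE; exact: cos_PI2.
move=> /(_ erefl) e.
have : (pi / 2 * 2 = PI / 2 * 2)%R by rewrite e.
by rewrite -!mulrA mulVf ?mulr1.
Qed.

Lemma bridge_deriv (F : R -> R) x l : derivable_pt_lim F x l ->
  derivable (F : R^o -> R^o) x 1 /\ derive1 (F : R^o -> R^o) x = l.
Proof.
move=> H.
have C : (fun h : R => h^-1 * (F (h + x) - F x)) @ (0:R)^' --> l.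
  apply/(@cvgrPdist_lt _ R^o) => e /RltP e0.
  have [d dh] := H e e0.
  apply/nbhs_ballP; exists (pos d) => /=; first by apply/RltP; exact: cond_pos d.
  move=> h hb hne.
  have hne' : h <> 0 by move=> h0; move: hne; rewrite h0 eqxx.
  have hd : (Rabs h < d)%coqR.
    by move: hb; rewrite /ball /= sub0r normrN -RabsE => /RltP.
  have := dh h hne' hd.
  by move/RltP; rewrite RabsE distrC (addrC h x) mulrC.
have E : (fun h : R => h^-1 *: (((F : R^o -> R^o) \o shift x) (h *: (1:R^o)) - F x)) = 
   (fun h : R => h^-1 * (F (h + x) - F x)).
  apply/funext => h /=; rewrite /shift /=.
  change (h^-1 * (F (h * 1 + x) - F x) = h^-1 * (F (h + x) - F x)).
  by rewrite mulr1.
move: C; rewrite -E => C.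
split; first exact: cvgP C.
by rewrite derive1E; apply: (@cvg_lim R^o) C.
Qed.

Lemma gauss_eq (F : R -> R) :
  (forall x, derivable_pt_lim F x (exp (-(x*x)))%coqR) -> F 0%coqR = 0%coqR ->
  forall b, (0 < b)%coqR -> F b = gauss_integral_proof.integral0_gauss b.
Proof.
move=> dF F0 b b0.
have D x : derivable (F : R^o -> R^o) x 1 /\ derive1 (F : R^o -> R^o) x = gauss_fun x.
  have [h1 h2] := @bridge_deriv _ _ _ (dF x); split => //.
  by rewrite h2 RexpE /gauss_fun expr2.
have cF x : F @ x --> F x.
  apply/continuity_pt_cvg; apply: derivable_continuous_pt.
  by exists (exp (-(x*x))); exact: dF.
have := @continuous_FTC2 R gauss_fun F 0 b _ _ _ _.
rewrite /gauss_integral_proof.integral0_gauss /Rintegral => ->.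
- by rewrite F0 -EFinB /=; exact: (esym (subr0 (F b))).
- by move/RltP: b0.
- by apply: continuous_subspaceT => x; exact: continuous_gauss_fun.
- split.
  + by move=> x _; exact: (D x).1.
  + exact: cvg_at_right_filter.
  + exact: cvg_at_left_filter.
- by move=> x _; exact: (D x).2.
Qed.

Lemma gauss_sq_lim eps : (0 < eps)%coqR -> exists M, forall x, (M < x)%coqR ->
  (Rabs (gauss_integral_proof.integral0_gauss x ^ 2 - PI / 4) < eps)%coqR.
Proof.
move=> e0.
have := @gauss_integral_proof.cvg_integral0_gauss_sqr R.
have e0' : (0 < eps)%R by apply/RltP.
move/(@cvgrPdist_lt _ R^o) => /(_ eps e0') [M [_ HM]].
exists M => x Mx.
have Mx' : (M < x)%R by apply/RltP.
have := HM x Mx'.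
have four : (4%R : R) = 4%coqR by rewrite IZRposE INRE.
have q : (PI / 4)%R = (PI / 4)%coqR by rewrite RdivE four.
by rewrite piE distrC -RabsE RpowE q => /RltP.
Qed.
End MC.

Lemma ln_le_xm1 x : 0 < x -> ln x <= x - 1.
Proof. intros hx. pose proof (exp_ineq1_le (ln x)). rewrite exp_ln in H; lra. Qed.

Lemma decr_ge (p p' : R -> R) a b : a <= b ->
  (forall c, a <= c <= b -> derivable_pt_lim p c (p' c)) ->
  (forall c, a < c < b -> p' c <= 0) -> p b <= p a.
Proof.
intros hab hd hn. destruct (Req_dec a b) as [e|ne]; [subst; lra|].
destruct (MVT_cor2 p p' a b) as [c [hc1 hc2]]; [lra|exact hd|].
specialize (hn c hc2). nra.
Qed.

Lemma phi_upper x : 0 < x <= 1 -> x * (1 - ln x) <= 1 - (1 - x) * (1 - x) / 2.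
Proof.
intros hx.
set (p := fun y => 1 - (1 - y) * (1 - y) / 2 - y * (1 - ln y)).
assert (p 1 <= p x).
{ apply (decr_ge p (fun y => (1 - y) + ln y)); [lra| |].
  - intros c hc. apply is_derive_Reals. unfold p. auto_derive; [lra|]. field. lra.
  - intros c hc. pose proof (ln_le_xm1 c). lra. }
unfold p in H; cbv beta in H. rewrite ln_1 in H. lra.
Qed.

Lemma r_nonneg x : 1/2 <= x <= 1 -> 0 <= ln x + (1 - x) + (1 - x) * (1 - x).
Proof.
intros hx.
set (p := fun y => ln y + (1 - y) + (1 - y) * (1 - y)).
assert (p 1 <= p x).
{ apply (decr_ge p (fun y => (1 - y) * (1 - 2 * y) / y)); [lra| |].
  - intros c hc. apply is_derive_Reals. unfold p. auto_derive; [lra|]. field. lra.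
  - intros c hc. apply Rmult_le_reg_r with c; [lra|].
    unfold Rdiv. rewrite Rmult_assoc, Rinv_l by lra. nra. }
unfold p in H; cbv beta in H. rewrite ln_1 in H. lra.
Qed.

Lemma phi_lower x : 1/2 <= x <= 1 ->
  1 - (1 - x) * (1 - x) / 2 - (1 - x) * (1 - x) * (1 - x) / 3 <= x * (1 - ln x).
Proof.
intros hx.
set (p := fun y => y * (1 - ln y) - 1 + (1 - y) * (1 - y) / 2 + (1 - y) * (1 - y) * (1 - y) / 3).
assert (p 1 <= p x).
{ apply (decr_ge p (fun y => - (ln y + (1 - y) + (1 - y) * (1 - y)))); [lra| |].
  - intros c hc. apply is_derive_Reals. unfold p. auto_derive; [lra|]. field. lra.
  - intros c hc. pose proof (r_nonneg c). lra. }
unfold p in H; cbv beta in H. rewrite ln_1 in H. lra.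
Qed.

Lemma ln_nonpos_arg y : y <= 0 -> ln y = 0.
Proof. intros hy. unfold ln. destruct (Rlt_dec 0 y); [exfalso; lra|reflexivity]. Qed.

Lemma integrand_pos t x : 0 < x -> integrand t (/ exp 1) x = exp (t * (x * (1 - ln x))).
Proof.
intros hx. unfold integrand.
rewrite ln_mult, ln_Rinv, ln_exp; try apply exp_pos; try apply Rinv_0_lt_compat, exp_pos; auto.
f_equal. ring.
Qed.

Lemma xlnx_bound x : 0 < x <= 1 -> 0 <= x * (- ln x) <= 2 * sqrt x.
Proof.
intros hx.
assert (hs : 0 < sqrt x) by (apply sqrt_lt_R0; lra).
assert (hss : sqrt x * sqrt x = x) by (apply sqrt_sqrt; lra).
assert (hl : ln x = 2 * ln (sqrt x)).
{ rewrite <- hss at 1. rewrite ln_mult by lra. ring. }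
assert (hl1 : ln x <= 0) by (pose proof (ln_le_xm1 x); lra).
assert (h2 : - ln (sqrt x) <= / sqrt x - 1).
{ rewrite <- ln_Rinv by lra. apply ln_le_xm1. apply Rinv_0_lt_compat; lra. }
split; [nra|].
rewrite hl.
assert (x * / sqrt x = sqrt x) by (rewrite <- hss at 1; field; lra).
nra.
Qed.

Lemma k_cont t : continuity_pt (fun x => - (t * x * ln (/ exp 1 * x))) 0.
Proof.
intros eps heps.
set (a := eps / (3 * Rabs t + 1)).
assert (ha : 0 < a) by (unfold a; apply Rdiv_lt_0_compat; [lra| pose proof (Rabs_pos t); lra]).
exists (Rmin 1 (a * a)). split; [apply Rmin_pos; nra|].
intros x [_ hx]. unfold R_dist in *. simpl in *.
unfold Rdist in *. rewrite Rminus_0_r in hx.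
replace (- (t * 0 * ln (/ exp 1 * 0))) with 0 by ring.
rewrite Rminus_0_r.
destruct (Rle_or_lt x 0) as [hx0|hx0].
- rewrite ln_nonpos_arg.
  + rewrite Rmult_0_r, Ropp_0, Rabs_R0. lra.
  + pose proof (Rinv_0_lt_compat _ (exp_pos 1)). nra.
- assert (hx1 : x <= 1) by (rewrite Rabs_pos_eq in hx by lra; pose proof (Rmin_l 1 (a*a)); lra).
  assert (hxa : x < a * a) by (rewrite Rabs_pos_eq in hx by lra; pose proof (Rmin_r 1 (a*a)); lra).
  rewrite ln_mult, ln_Rinv, ln_exp; try apply exp_pos; try apply Rinv_0_lt_compat, exp_pos; auto.
  pose proof (xlnx_bound x (conj hx0 hx1)) as [b1 b2].
  assert (hs : 0 <= sqrt x) by apply sqrt_pos.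
  assert (hsa : sqrt x < a).
  { rewrite <- (sqrt_square a) by lra. apply sqrt_lt_1_alt. lra. }
  assert (hss : sqrt x * sqrt x = x) by (apply sqrt_sqrt; lra).
  assert (hxs : x <= sqrt x) by nra.
  replace (- (t * x * (- (1) + ln x))) with (t * (x + x * (- ln x))) by ring.
  rewrite Rabs_mult.
  assert (hE : Rabs (x + x * - ln x) <= 3 * sqrt x) by (rewrite Rabs_pos_eq by lra; lra).
  assert (ha2 : (3 * Rabs t + 1) * a = eps) by (unfold a; field; pose proof (Rabs_pos t); lra).
  pose proof (Rabs_pos t).
  apply Rle_lt_trans with (Rabs t * (3 * sqrt x)); [apply Rmult_le_compat_l; lra|].
  nra.
Qed.

Lemma h_cont t z : 0 <= z -> continuous (fun x => integrand t (/ exp 1) x) z.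
Proof.
intros hz. unfold integrand.
destruct (Req_dec z 0) as [->|hz0].
- apply continuous_comp with (f := fun x => - (t * x * ln (/ exp 1 * x))).
  + apply continuity_pt_filterlim. apply k_cont.
  + apply continuity_pt_filterlim. apply derivable_continuous_pt. apply derivable_pt_exp.
- apply (@ex_derive_continuous R_AbsRing R_NormedModule). auto_derive.
  pose proof (Rinv_0_lt_compat _ (exp_pos 1)). nra.
Qed.

Lemma h_int t a b : 0 <= a -> 0 <= b -> ex_RInt (fun x => integrand t (/ exp 1) x) a b.
Proof.
intros ha hb. apply (@ex_RInt_continuous R_CompleteNormedModule). intros z hz. apply h_cont.
pose proof (Rmin_glb_lt 0 a b). destruct (Rle_dec 0 (Rmin a b)); [lra|].
unfold Rmin in *. destruct (Rle_dec a b); lra.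
Qed.

Definition g (v : R) := exp (- (v * v)).
Definition GI (x : R) := RInt g 0 x.

Lemma exp_le x y : x <= y -> exp x <= exp y.
Proof. intros h. destruct (Req_dec x y) as [->|n]; [lra|]. left; apply exp_increasing; lra. Qed.

Lemma cont_int (f : R -> R) a b : (forall x, continuous f x) -> ex_RInt f a b.
Proof. intros h. apply (@ex_RInt_continuous R_CompleteNormedModule). intros; apply h. Qed.

Lemma g_cont x : continuous g x.
Proof. apply (@ex_derive_continuous R_AbsRing R_NormedModule). unfold g. auto_derive. auto. Qed.

Lemma gs_cont s x : continuous (fun x => g (s * (1 - x))) x.
Proof. apply (@ex_derive_continuous R_AbsRing R_NormedModule). unfold g. auto_derive. auto. Qed.

Lemma RInt_scal_R (f : R -> R) a b k : ex_RInt f a b -> RInt (fun x => k * f x) a b = k * RInt f a b.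
Proof. intros h. apply (RInt_scal f a b k h). Qed.

Lemma int_gs s a : 0 < s -> RInt (fun x => g (s * (1 - x))) a 1 = GI (s * (1 - a)) / s.
Proof.
intros hs.
assert (E : RInt (fun y => (- s) * (g (- s * y + s))) a 1 = RInt g (- s * a + s) (- s * 1 + s)).
{ exact (RInt_comp_lin g (-s) s a 1 (cont_int _ _ _ g_cont)). }
rewrite RInt_scal_R in E.
2: { apply (cont_int (fun y => g (- s * y + s))). intros x.
     apply (@ex_derive_continuous R_AbsRing R_NormedModule). unfold g. auto_derive. auto. }
replace (- s * 1 + s) with 0 in E by ring.
replace (- s * a + s) with (s * (1 - a)) in E by ring.
rewrite <- (opp_RInt_swap g) in E by (apply cont_int, g_cont).
unfold GI.
rewrite (RInt_ext (fun x => g (s * (1 - x))) (fun y => g (- s * y + s))).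
2: { intros x _. f_equal. ring. }
change (opp (RInt g 0 (s * (1 - a)))) with (- (RInt g 0 (s * (1 - a)))) in E.
apply Rmult_eq_reg_l with (- s); [|lra].
rewrite E. field. lra.
Qed.

Ltac cont_tac := apply (@ex_derive_continuous R_AbsRing R_NormedModule); unfold g; auto_derive; auto.

Lemma upper t s : 0 < s -> t = 2 * s * s ->
  RInt (fun x => integrand t (/ exp 1) x) 0 1 <= exp t * (GI s / s).
Proof.
intros hs ht.
apply Rle_trans with (RInt (fun x => exp t * g (s * (1 - x))) 0 1).
- apply RInt_le; [lra | apply h_int; lra | apply cont_int; intros; cont_tac |].
  intros x hx. rewrite integrand_pos by lra. unfold g. rewrite <- exp_plus. apply exp_le.
  pose proof (phi_upper x ltac:(lra)). subst t. nra.
- rewrite RInt_scal_R by (apply cont_int; intros; cont_tac).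
  rewrite int_gs by lra. rewrite Rminus_0_r, Rmult_1_r. lra.
Qed.

Lemma B_bound s : 0 < s ->
  RInt (fun x => (1 - x) ^ 3 * g (s * (1 - x))) (1/2) 1 <= / (2 * s * s * s * s).
Proof.
intros hs.
set (P := fun x => ((1 - x) * (1 - x) / (2 * s * s) + / (2 * s * s * s * s)) * g (s * (1 - x))).
assert (H : is_RInt (fun x => (1 - x) ^ 3 * g (s * (1 - x))) (1/2) 1 (minus (P 1) (P (1/2)))).
{ apply (@is_RInt_derive R_CompleteNormedModule).
  - intros x _. unfold P, g. auto_derive; auto. unfold Rminus. field. lra.
  - intros x _. cont_tac. }
rewrite (is_RInt_unique _ _ _ _ H).
change (minus (P 1) (P (1/2))) with (P 1 - P (1/2)).
assert (P1 : P 1 = / (2 * s * s * s * s)).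
{ unfold P, g. replace (s * (1 - 1)) with 0 by ring. rewrite Rmult_0_r, Ropp_0, exp_0. field. lra. }
assert (P2 : 0 <= P (1/2)).
{ unfold P, g. apply Rmult_le_pos; [|left; apply exp_pos].
  apply Rplus_le_le_0_compat.
  - apply Rmult_le_pos; [nra|]. left; apply Rinv_0_lt_compat; nra.
  - left; apply Rinv_0_lt_compat. repeat apply Rmult_lt_0_compat; lra. }
lra.
Qed.

Lemma lower t s : 0 < s -> t = 2 * s * s ->
  exp t * (GI (s / 2) / s - (2 * s * s / 3) * / (2 * s * s * s * s))
  <= RInt (fun x => integrand t (/ exp 1) x) 0 1.
Proof.
intros hs ht.
set (h := fun x => integrand t (/ exp 1) x).
assert (chas : RInt h 0 1 = RInt h 0 (1/2) + RInt h (1/2) 1).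
{ symmetry. exact (RInt_Chasles h 0 (1/2) 1 (h_int t 0 (1/2) ltac:(lra) ltac:(lra)) (h_int t (1/2) 1 ltac:(lra) ltac:(lra))). }
assert (pos : 0 <= RInt h 0 (1/2)).
{ apply RInt_ge_0; [lra | apply h_int; lra |]. intros; unfold h, integrand; left; apply exp_pos. }
set (f1 := fun x => exp t * g (s * (1 - x))).
set (f2 := fun x => (exp t * (2 * s * s / 3)) * ((1 - x) ^ 3 * g (s * (1 - x)))).
assert (i1 : ex_RInt f1 (1/2) 1) by (apply cont_int; intros; unfold f1; cont_tac).
assert (i2 : ex_RInt f2 (1/2) 1) by (apply cont_int; intros; unfold f2; cont_tac).
assert (low : RInt (fun x => f1 x - f2 x) (1/2) 1 <= RInt h (1/2) 1).
{ apply RInt_le; [lra | apply cont_int; intros; unfold f1, f2; cont_tac | apply h_int; lra |].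
  intros x hx. unfold h, f1, f2. rewrite integrand_pos by lra.
  pose proof (phi_lower x ltac:(lra)) as hl.
  assert (e1 : exp (t * (1 - (1 - x) * (1 - x) / 2 - (1 - x) * (1 - x) * (1 - x) / 3))
             <= exp (t * (x * (1 - ln x)))).
  { apply exp_le. apply Rmult_le_compat_l; [subst t; nra | lra]. }
  replace (t * (1 - (1 - x) * (1 - x) / 2 - (1 - x) * (1 - x) * (1 - x) / 3))
    with ((t + - (s * (1 - x) * (s * (1 - x)))) + (- (t * ((1 - x) ^ 3) / 3))) in e1
    by (rewrite ht; field).
  rewrite exp_plus, exp_plus in e1.
  pose proof (exp_ineq1_le (- (t * ((1 - x) ^ 3) / 3))) as e2.
  assert (pe : 0 < exp t * exp (- (s * (1 - x) * (s * (1 - x))))) by (apply Rmult_lt_0_compat; apply exp_pos).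
  unfold g.
  replace (s * (1 - x) * (s * (1 - x))) with (s * (1 - x) * (s * (1 - x))) by ring.
  subst t.
  set (E := exp (2 * s * s)) in *. set (G := exp (- (s * (1 - x) * (s * (1 - x))))) in *.
  nra. }
replace (RInt (fun x => f1 x - f2 x) (1/2) 1) with (RInt f1 (1/2) 1 - RInt f2 (1/2) 1) in low
  by (symmetry; exact (RInt_minus f1 f2 _ _ i1 i2)).
unfold f1, f2 in low.
rewrite RInt_scal_R in low by (apply cont_int; intros; cont_tac).
rewrite RInt_scal_R in low by (apply cont_int; intros; cont_tac).
rewrite int_gs in low by lra.
replace (s * (1 - 1/2)) with (s / 2) in low by field.
pose proof (B_bound s hs) as hB.
assert (c : 0 <= exp t * (2 * s * s / 3)) by (apply Rmult_le_pos; [left; apply exp_pos | nra]).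
fold h. rewrite chas.
assert (exp t * (2 * s * s / 3) * RInt (fun x => (1 - x) ^ 3 * g (s * (1 - x))) (1 / 2) 1
        <= exp t * (2 * s * s / 3) * / (2 * s * s * s * s)) by (apply Rmult_le_compat_l; auto).
lra.
Qed.

Lemma GI_deriv x : derivable_pt_lim GI x (exp (- (x * x))).
Proof.
apply is_derive_Reals.
apply (is_derive_RInt g GI 0 x).
- apply filter_forall. intros b. apply (@RInt_correct R_CompleteNormedModule). apply cont_int, g_cont.
- apply g_cont.
Qed.

Lemma GI0 : GI 0 = 0.
Proof. unfold GI. apply (@RInt_point R_CompleteNormedModule). Qed.

Lemma gauss_lim eps : 0 < eps -> exists M, forall x, M < x -> Rabs (GI x - sqrt PI / 2) < eps.
Proof.
intros heps.
set (c := sqrt PI / 2).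
assert (hc : 0 < c) by (unfold c; pose proof (sqrt_lt_R0 PI PI_RGT_0); lra).
assert (hcc : c * c = PI / 4).
{ unfold c. replace (sqrt PI / 2 * (sqrt PI / 2)) with (sqrt PI * sqrt PI / 4) by field.
  rewrite sqrt_sqrt; [field | left; apply PI_RGT_0]. }
destruct (MC.gauss_sq_lim (eps * c)) as [M HM]; [nra|].
exists (Rmax M 0). intros x hx.
pose proof (Rmax_l M 0). pose proof (Rmax_r M 0).
assert (hx0 : 0 < x) by lra.
pose proof (MC.gauss_eq GI GI_deriv GI0 x hx0) as e.
specialize (HM x ltac:(lra)). rewrite <- e in HM.
assert (pos : 0 <= GI x).
{ apply RInt_ge_0; [lra | apply cont_int, g_cont |]. intros; left; apply exp_pos. }
fold c. set (a := GI x) in *.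
rewrite <- hcc in HM. simpl in HM. rewrite Rmult_1_r in HM.
apply Rabs_def2 in HM. destruct HM as [h1 h2].
apply Rabs_def1.
- destruct (Rlt_or_le (a - c) eps) as [q|q]; [exact q|].
  assert ((a - c) * (a + c) >= eps * (a + c)) by (apply Rle_ge, Rmult_le_compat_r; lra).
  nra.
- destruct (Rlt_or_le (- eps) (a - c)) as [q|q]; [exact q|].
  assert ((c - a) * (a + c) >= eps * c) by (apply Rle_ge, Rmult_le_compat; lra).
  nra.
Qed.

Theorem mainTheorem4 :
  is_lim (fun t => f_ta t (/ exp 1) / (sqrt (PI * t / 2) * exp t)) p_infty 1.
Proof.
apply is_lim_spec. intros [eps heps]. simpl.
set (c := sqrt PI).
assert (hc : 0 < c) by (apply sqrt_lt_R0, PI_RGT_0).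
destruct (gauss_lim (eps * c / 4)) as [M0 HM0]; [nra|].
set (K := Rmax (2 * Rmax M0 0) (2 / (eps * c)) + 1).
assert (hK1 : 2 * Rmax M0 0 < K) by (unfold K; pose proof (Rmax_l (2 * Rmax M0 0) (2 / (eps * c))); lra).
assert (hK2 : 2 / (eps * c) < K) by (unfold K; pose proof (Rmax_r (2 * Rmax M0 0) (2 / (eps * c))); lra).
assert (hM0 : 0 <= Rmax M0 0) by apply Rmax_r.
assert (hM0' : M0 <= Rmax M0 0) by apply Rmax_l.
assert (hec : 0 < eps * c) by nra.
assert (h2ec : 0 < 2 / (eps * c)) by (apply Rdiv_lt_0_compat; lra).
exists (2 * K * K). intros t ht.
assert (hKp : 0 < K) by lra.
set (s := sqrt (t / 2)).
assert (hss : s * s = t / 2) by (apply sqrt_sqrt; nra).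
assert (hsK : K < s).
{ unfold s. rewrite <- (sqrt_square K) by lra. apply sqrt_lt_1_alt. nra. }
assert (hs : 0 < s) by lra.
assert (ht2 : t = 2 * s * s) by lra.
assert (hsq : sqrt (PI * t / 2) = c * s).
{ replace (PI * t / 2) with (PI * (s * s)) by (rewrite hss; field). unfold c.
  rewrite sqrt_mult_alt by (left; apply PI_RGT_0). rewrite sqrt_square; lra. }
set (I := RInt (fun x => integrand t (/ exp 1) x) 0 1).
pose proof (upper t s hs ht2) as hU. pose proof (lower t s hs ht2) as hL.
fold I in hU, hL.
set (E := exp t) in *.
assert (hE : 0 < E) by apply exp_pos.
set (A := GI s) in *. set (B := GI (s / 2)) in *.
assert (hA : Rabs (A - c / 2) < eps * c / 4) by (apply HM0; lra).
assert (hB : Rabs (B - c / 2) < eps * c / 4) by (apply HM0; lra).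
apply Rabs_def2 in hA. apply Rabs_def2 in hB. destruct hA as [hA1 hA2]. destruct hB as [hB1 hB2].
unfold f_ta. fold I. rewrite hsq.
set (r := t * I / (c * s * E)).
assert (hr : c * s * E * r = 2 * s * s * I) by (unfold r; rewrite ht2; field; lra).
assert (hsE : 0 < s * E) by nra.
assert (hU' : c * r <= 2 * A).
{ assert (2 * s * s * I <= 2 * s * s * (E * (A / s))) by (apply Rmult_le_compat_l; nra).
  replace (2 * s * s * (E * (A / s))) with (s * E * (2 * A)) in H by (field; lra).
  apply Rmult_le_reg_l with (s * E); [lra|]. nra. }
assert (hL' : 2 * B - 2 / (3 * s) <= c * r).
{ assert (2 * s * s * (E * (B / s - 2 * s * s / 3 * / (2 * s * s * s * s))) <= 2 * s * s * I)
    by (apply Rmult_le_compat_l; nra).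
  replace (2 * s * s * (E * (B / s - 2 * s * s / 3 * / (2 * s * s * s * s)))) with (s * E * (2 * B - 2 / (3 * s))) in H by (field; lra).
  apply Rmult_le_reg_l with (s * E); [lra|]. nra. }
assert (h3 : 2 / (3 * s) < eps * c / 3).
{ assert (2 < eps * c * s).
  { assert (hh : 2 / (eps * c) * (eps * c) = 2) by (field; lra). nra. }
  apply Rmult_lt_reg_r with (3 * s); [lra|]. replace (2 / (3 * s) * (3 * s)) with 2 by (field; lra). nra. }
apply Rabs_def1.
- apply Rmult_lt_reg_l with c; [lra|]. nra.
- apply Rmult_lt_reg_l with c; [lra|]. nra.
Qed.
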